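(* For $L_2>0$ define $\bar h:\mathbb{R}^{3\times3}\to\mathbb{R}$ by $\bar h(R)=g(\|R^TR-I\|_F)$ with $g(x)=L_2\sqrt{3L_2^2x^2+1}-L_2$. Then: (i) there is a polynomial $q$ such that for every $L_2>0$, $\bar h$ is $q(L_2)$-curvature bounded; (ii) $\bar h$ is twice differentiable; (iii) its second derivatives are locally Lipschitz; and (v) $g$ is monotone in $|x|$, $\min_x g(x)=0$, and $g(x)=L_2$ when $|x|=1/L_2$.
   Context: $\|\cdot\|_F$ is the Frobenius norm; $R$ is identified with a vector in $\mathbb{R}^9$. A function $\phi$ is $L$-curvature bounded if $\phi(x)+\frac L2\|x\|^2$ is convex and $\nabla\phi$ is $L$-Lipschitz. *)

(* Defs.v *)
(* R : realType, matrices 'M[R]_3 with the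
   library's normed-module structure (all norms are equivalent in finite
   dimension, so differentiability notions do not depend on it); the
   Frobenius norm is defined explicitly below and used for all
   quantitative statements. *)
From HB Require Import structures.
From mathcomp Require Import all_boot all_order all_algebra.
From mathcomp Require Import all_classical all_reals all_analysis.
Set Implicit Arguments. Unset Strict Implicit. Unset Printing Implicit Defensive.
Import Order.TTheory GRing.Theory Num.Theory.
Import numFieldNormedType.Exports.
Local Open Scope ring_scope.

Section Defs.
Variable R : realType.

Definition frob (A : 'M[R]_3) : R :=
  Num.sqrt (\sum_(i < 3) \sum_(j < 3) A i j ^+ 2).

Definition gfun (L2 x : R) : R :=
  L2 * Num.sqrt (3 * L2 ^+ 2 * x ^+ 2 + 1) - L2.

Definition hbar (L2 : R) (X : 'M[R]_3) : R :=
  gfun L2 (frob (X^T *m X - 1%:M)).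

Definition convex_mx (f : 'M[R]_3 -> R) : Prop :=
  forall (x y : 'M[R]_3) (t : R), 0 <= t -> t <= 1 ->
    f (t *: x + (1 - t) *: y) <= t * f x + (1 - t) * f y.

Definition grad (f : 'M[R]_3 -> R) (x : 'M[R]_3) : 'M[R]_3 :=
  \matrix_(i, j) ('D_(delta_mx i j) f x).

Definition hess (f : 'M[R]_3 -> R) (x : 'M[R]_3) (i j k l : 'I_3) : R :=
  'D_(delta_mx k l) (fun y => grad f y i j) x.

Definition curvature_bounded (L : R) (f : 'M[R]_3 -> R) : Prop :=
  convex_mx (fun x => f x + L / 2 * frob x ^+ 2) /\
  (forall x, differentiable f x) /\
  (forall x y, frob (grad f x - grad f y) <= L * frob (x - y)).

Definition twice_differentiable (f : 'M[R]_3 -> R) : Prop :=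
  (forall x, differentiable f x) /\ (forall x, differentiable (grad f) x).

Definition hess_locally_lipschitz (f : 'M[R]_3 -> R) : Prop :=
  forall x : 'M[R]_3, exists r : R, exists K : R, 0 < r /\
    forall y z : 'M[R]_3, frob (y - x) < r -> frob (z - x) < r ->
      forall i j k l : 'I_3,
        `|hess f y i j k l - hess f z i j k l| <= K * frob (y - z).

End Defs.

(* Main.v *)
Require Import Defs.
From HB Require Import structures.
From mathcomp Require Import all_boot all_order all_algebra.
From mathcomp Require Import all_classical all_reals all_analysis.
From mathcomp Require Import ring lra.
Set Implicit Arguments. Unset Strict Implicit. Unset Printing Implicit Defensive.
Import Order.TTheory GRing.Theory Num.Theory.
Import numFieldNormedType.Exports.
Local Open Scope ring_scope.

Section HDsec.
Variable R : realType.
Local Notation M := 'M[R]_3.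

Definition HD (f : M -> R) (df : M -> M -> R) :=
  forall x, differentiable f x /\ forall v, 'D_v f x = df x v.

Lemma HD_ext f df df' : HD f df -> (forall x v, df x v = df' x v) -> HD f df'.
Proof. by move=> H E x; have [? D] := H x; split=> // v; rewrite D E. Qed.

Lemma HD_feq f g df : HD f df -> (forall x, f x = g x) -> HD g df.
Proof. by move=> H E; have -> : g = f by apply/funext=> x; rewrite E. Qed.

Lemma HD_cst (a : R) : HD (fun _ => a) (fun _ _ => 0).
Proof.
move=> x; split; first exact: differentiable_cst.
by move=> v; exact: (derive_cst a x v).
Qed.

Lemma HD_coord (i j : 'I_3) : HD (fun N : M => N i j) (fun _ v => v i j).
Proof.
move=> x; split; first exact: differentiable_coord.
move=> v; have := @derive_mx R M 3 3 id x v (@derivable_id R M x v).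
by rewrite derive_id => /(congr1 (fun A : M => A i j)); rewrite mxE.
Qed.

Lemma HD_add f g df dg : HD f df -> HD g dg ->
  HD (fun y => f y + g y) (fun x v => df x v + dg x v).
Proof.
move=> Hf Hg x; have [f1 f2] := Hf x; have [g1 g2] := Hg x.
have -> : (fun y => f y + g y) = f + g by [].
split; first exact: differentiableD.
move=> v; rewrite deriveD ?f2 ?g2 //; exact: diff_derivable.
Qed.

Lemma HD_opp f df : HD f df -> HD (fun y => - f y) (fun x v => - df x v).
Proof.
move=> Hf x; have [f1 f2] := Hf x.
have -> : (fun y => - f y) = - f by [].
split; first exact: differentiableN.
move=> v; rewrite deriveN ?f2 //; exact: diff_derivable.
Qed.

Lemma HD_mul f g df dg : HD f df -> HD g dg ->
  HD (fun y => f y * g y) (fun x v => f x * dg x v + g x * df x v).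
Proof.
move=> Hf Hg x; have [f1 f2] := Hf x; have [g1 g2] := Hg x.
have -> : (fun y => f y * g y) = f * g by [].
split; first exact: differentiableM.
move=> v; rewrite deriveM ?f2 ?g2 //; exact: diff_derivable.
Qed.

Lemma HD_inv f df : HD f df -> (forall x, f x != 0) ->
  HD (fun y => (f y)^-1) (fun x v => - (f x) ^- 2 * df x v).
Proof.
move=> Hf nz x; have [f1 f2] := Hf x.
split; first exact: differentiableV.
move=> v; rewrite deriveV ?f2 //; exact: diff_derivable.
Qed.

Lemma HD_sqrt f df : HD f df -> (forall x, 0 < f x) ->
  HD (fun y => Num.sqrt (f y)) (fun x v => df x v / (2 * Num.sqrt (f x))).
Proof.
move=> Hf pos x; have [f1 f2] := Hf x.
have ds : differentiable (@Num.sqrt R) (f x).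
  apply/derivable1_diffP.
  by have := is_derive1_sqrt (pos x) => -[].
have -> : (fun y => Num.sqrt (f y)) = Num.sqrt \o f by [].
split; first exact: differentiable_comp.
move=> v; rewrite deriveE; last exact: differentiable_comp.
rewrite diff_comp // /= diff1E // derive1E derive_sqrt // -deriveE // f2.
by [].
Qed.

Lemma HD_sum n (F : 'I_n -> M -> R) dF : (forall i, HD (F i) (dF i)) ->
  HD (fun y => \sum_(i < n) F i y) (fun x v => \sum_(i < n) dF i x v).
Proof.
move=> H x.
have -> : (fun y => \sum_(i < n) F i y) = \sum_(i < n) F i by rewrite fct_sumE.
split; first by apply: differentiable_sum => i; have [] := H i x.
move=> v; rewrite derive_sum; last by move=> i; have [d _] := H i x; exact: diff_derivable.
by apply: eq_bigr => i _; have [_ ->] := H i x.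
Qed.

Lemma HD_line f df (a v : M) : HD f df -> forall t : R,
  is_derive t 1 (fun s : R => f (a + s *: v)) (df (a + t *: v) v).
Proof.
move=> Hf t.
pose l := fun s : R => a + s *: v.
have dl : is_diff t l (fun r : R => 0 + r *: v).
  have -> : l = cst a + ( *:%R ^~ v) by [].
  exact: is_diffD.
have [f1 f2] := Hf (l t).
have dc : differentiable (f \o l) t by apply: differentiable_comp.
apply: DeriveDef; first exact: diff_derivable.
rewrite deriveE // diff_comp // /= diff_val /= add0r scale1r -deriveE //.
Qed.

End HDsec.


Section Norms.
Variable R : realType.
Local Notation M := 'M[R]_3.
Implicit Types A B C : M.

Lemma CS (I : finType) (a b : I -> R) :
  (\sum_i a i * b i) ^+ 2 <= (\sum_i a i ^+ 2) * (\sum_i b i ^+ 2).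
Proof.
set A := \sum_i a i ^+ 2; set B := \sum_i b i ^+ 2; set S := \sum_i a i * b i.
have A0 : 0 <= A by apply: sumr_ge0 => i _; exact: sqr_ge0.
have [Ae0|Apos] := eqVneq A 0.
  have ai0 : forall i, a i = 0.
    move=> i; apply/eqP; rewrite -sqrf_eq0; apply/eqP.
    by apply: (psumr_eq0P (fun i _ => sqr_ge0 (a i)) Ae0).
  rewrite /S (eq_bigr (fun _ => 0)) ?big1 // => [|i _]; last by rewrite ai0 mul0r.
  by rewrite expr0n /= Ae0 mul0r.
have Ap : 0 < A by rewrite lt_def Apos A0.
have key : \sum_i (A * b i - S * a i) ^+ 2 = A * (A * B - S ^+ 2).
  transitivity (\sum_i (A ^+ 2 * b i ^+ 2 - (2 * A * S) * (a i * b i) + S ^+ 2 * a i ^+ 2)).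
    by apply: eq_bigr => i _; ring.
  rewrite big_split /= sumrB -!mulr_sumr -/A -/B -/S; ring.
have : 0 <= A * (A * B - S ^+ 2).
  by rewrite -key; apply: sumr_ge0 => i _; exact: sqr_ge0.
by rewrite pmulr_rge0 // subr_ge0.
Qed.

Definition ip (A B : M) : R := \sum_i \sum_j A i j * B i j.

Lemma ip_pair A B : ip A B = \sum_(p : 'I_3 * 'I_3) A p.1 p.2 * B p.1 p.2.
Proof. by rewrite /ip pair_bigA. Qed.

Lemma ipC A B : ip A B = ip B A.
Proof. by apply: eq_bigr => i _; apply: eq_bigr => j _; rewrite mulrC. Qed.

Lemma ipDl A B C : ip (A + B) C = ip A C + ip B C.
Proof.
rewrite /ip -big_split /=; apply: eq_bigr => i _.
rewrite -big_split /=; apply: eq_bigr => j _; rewrite !mxE; ring.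
Qed.

Lemma ipDr A B C : ip A (B + C) = ip A B + ip A C.
Proof. by rewrite ipC ipDl !(ipC A). Qed.

Lemma ipNl A C : ip (- A) C = - ip A C.
Proof.
rewrite /ip -sumrN; apply: eq_bigr => i _.
rewrite -sumrN; apply: eq_bigr => j _; rewrite !mxE; ring.
Qed.

Lemma ipZl k A C : ip (k *: A) C = k * ip A C.
Proof.
rewrite /ip mulr_sumr; apply: eq_bigr => i _.
rewrite mulr_sumr; apply: eq_bigr => j _; rewrite !mxE; ring.
Qed.

Lemma ip_ge0 A : 0 <= ip A A.
Proof. by apply: sumr_ge0 => i _; apply: sumr_ge0 => j _; rewrite -expr2 sqr_ge0. Qed.

Lemma frobE A : frob A = Num.sqrt (ip A A).
Proof.
rewrite /frob /ip; congr Num.sqrt; apply: eq_bigr => i _; apply: eq_bigr => j _.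
Qed.

Lemma frob_ge0 A : 0 <= frob A.
Proof. exact: sqrtr_ge0. Qed.

Lemma frob_sq A : frob A ^+ 2 = ip A A.
Proof. by rewrite frobE sqr_sqrtr // ip_ge0. Qed.

Lemma le_of_sq (x y : R) : 0 <= y -> x ^+ 2 <= y ^+ 2 -> `|x| <= y.
Proof.
move=> y0 h; rewrite -sqrtr_sqr -[y](ger0_norm y0) -sqrtr_sqr.
exact: ler_wsqrtr.
Qed.

Lemma le_of_sq' (x y : R) : 0 <= y -> x ^+ 2 <= y ^+ 2 -> x <= y.
Proof. by move=> y0 h; apply: le_trans (ler_norm x) (le_of_sq y0 h). Qed.

Lemma ip_le A B : `|ip A B| <= frob A * frob B.
Proof.
apply: le_of_sq; first exact: mulr_ge0 (frob_ge0 _) (frob_ge0 _).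
rewrite exprMn !frob_sq !ip_pair; exact: CS.
Qed.

Lemma ip_le' A B : ip A B <= frob A * frob B.
Proof. exact: le_trans (ler_norm _) (ip_le A B). Qed.

Lemma frobD A B : frob (A + B) <= frob A + frob B.
Proof.
apply: le_of_sq'; first exact: addr_ge0 (frob_ge0 _) (frob_ge0 _).
rewrite frob_sq sqrrD !frob_sq !ipDl !ipDr [ip B A]ipC mulr2n; have := ip_le' A B; lra.
Qed.

Lemma frobZ k A : frob (k *: A) = `|k| * frob A.
Proof.
rewrite !frobE ipZl ipC ipZl mulrA -expr2 sqrtrM ?sqr_ge0 // sqrtr_sqr //.
Qed.

Lemma frobN A : frob (- A) = frob A.
Proof. by rewrite -scaleN1r frobZ normrN normr1 mul1r. Qed.

Lemma frobB A B : frob (A - B) = frob (B - A).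
Proof. by rewrite -frobN opprB. Qed.

Lemma frob0 : frob (0 : M) = 0.
Proof. by rewrite -(scale0r 0) frobZ normr0 mul0r. Qed.

Lemma entry_le A i j : `|A i j| <= frob A.
Proof.
apply: le_of_sq; first exact: frob_ge0.
rewrite frob_sq /ip (bigD1 i) //= (bigD1 j) //= -expr2.
rewrite -addrA lerDl; apply: addr_ge0.
  by apply: sumr_ge0 => k _; rewrite -expr2 sqr_ge0.
by apply: sumr_ge0 => k _; apply: sumr_ge0 => l _; rewrite -expr2 sqr_ge0.
Qed.

Lemma frob_tr A : frob A^T = frob A.
Proof.
rewrite !frobE /ip exchange_big; congr Num.sqrt.
by apply: eq_bigr => i _; apply: eq_bigr => j _; rewrite !mxE.
Qed.

Lemma frob_mul A B : frob (A *m B) <= frob A * frob B.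
Proof.
apply: le_of_sq'; first exact: mulr_ge0 (frob_ge0 _) (frob_ge0 _).
rewrite exprMn !frob_sq /ip.
apply: (@le_trans _ _ (\sum_i \sum_j ((\sum_k A i k ^+ 2) * (\sum_k B k j ^+ 2)))).
  apply: ler_sum => i _; apply: ler_sum => j _; rewrite -expr2 mxE.
  exact: (CS (fun k => A i k) (fun k => B k j)).
rewrite mulr_suml; apply: ler_sum => i _.
rewrite -mulr_sumr exchange_big /=.
rewrite le_eqVlt; apply/orP; left; apply/eqP; by congr (_ * _).
Qed.

Lemma ip_delta A a b : ip A (delta_mx a b) = A a b.
Proof.
rewrite /ip (bigD1 a) //= addrC big1 ?add0r => [|i ia]; last first.
  by apply: big1 => j _; rewrite mxE (negbTE ia) mulr0.
rewrite (bigD1 b) //= addrC big1 ?add0r => [|j jb]; last by rewrite mxE (negbTE jb) andbF mulr0.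
by rewrite mxE !eqxx mulr1.
Qed.

End Norms.


Section Funs.
Variable R : realType.
Local Notation M := 'M[R]_3.
Implicit Types A B C X V W : M.

Lemma ip_tr A B : ip A B = \tr (A^T *m B).
Proof.
rewrite /ip /mxtrace exchange_big; apply: eq_bigr => j _.
by rewrite mxE; apply: eq_bigr => i _; rewrite mxE.
Qed.

Lemma ip_trT A B : ip A^T B^T = ip A B.
Proof.
by rewrite /ip exchange_big; apply: eq_bigr => j _; apply: eq_bigr => i _; rewrite !mxE.
Qed.

Lemma ip_trmul A B C : ip A (B^T *m C) = ip (B *m A) C.
Proof. by rewrite !ip_tr trmx_mul mulmxA. Qed.

Definition EMx X : M := X^T *m X - 1%:M.
Definition dEM X V : M := V^T *m X + X^T *m V.

Lemma EM_sym X : (EMx X)^T = EMx X.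
Proof. by rewrite /EMx linearB /= trmx_mul trmxK trmx1. Qed.

Lemma ip_EdE X V : ip (EMx X) (dEM X V) = 2 * ip (X *m EMx X) V.
Proof.
rewrite /dEM ipDr !ip_trmul.
have -> : ip (V *m EMx X) X = ip (X *m EMx X) V.
  rewrite !ip_tr -mxtrace_tr !trmx_mul !trmxK EM_sym mulmxA mxtrace_mulC.
  by rewrite mulmxA.
by rewrite mulr2n mulrDl mul1r.
Qed.

Lemma HD_scal (f : M -> R) (df : M -> M -> R) (k : R) : HD f df -> HD (fun y => k * f y) (fun x v => k * df x v).
Proof.
move=> H; apply: HD_ext (HD_mul (HD_cst k) H) _ => x v; ring.
Qed.

Lemma HD_sub (f g : M -> R) (df dg : M -> M -> R) : HD f df -> HD g dg ->
  HD (fun y => f y - g y) (fun x v => df x v - dg x v).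
Proof. by move=> Hf Hg; apply: HD_add Hf (HD_opp Hg). Qed.

Lemma HD_mulmx (F G : M -> M) (dF dG : M -> M -> M) (a b : 'I_3) :
  (forall i j, HD (fun X => F X i j) (fun X V => dF X V i j)) ->
  (forall i j, HD (fun X => G X i j) (fun X V => dG X V i j)) ->
  HD (fun X => (F X *m G X) a b) (fun X V => (dF X V *m G X + F X *m dG X V) a b).
Proof.
move=> HF HG.
have H := HD_sum (fun k => HD_mul (HF a k) (HG k b)).
apply: HD_feq (HD_ext H _) _ => [x v|x]; last by rewrite mxE.
rewrite [in RHS]mxE !mxE -big_split /=; apply: eq_bigr => k _; ring.
Qed.

Lemma HD_E (i j : 'I_3) : HD (fun X => EMx X i j) (fun X V => dEM X V i j).
Proof.
have HT : forall (F : M -> M) (dF : M -> M -> M), (forall i j, HD (fun X => F X i j) (fun X V => dF X V i j)) ->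
   forall i j, HD (fun X => (F X)^T i j) (fun X V => (dF X V)^T i j).
  by move=> F dF H a b; apply: HD_feq (HD_ext (H b a) _) _ => *; rewrite mxE.
have Hid : forall i j, HD (fun X : M => X i j) (fun X V => V i j) by exact: HD_coord.
have := HD_mulmx i j (HT _ _ Hid) Hid.
move=> H; apply: HD_feq (HD_ext (HD_sub H (HD_cst ((1%:M : M) i j))) _) _.
  by move=> x v; rewrite /dEM !mxE subr0 addrC.
by move=> x; rewrite /EMx !mxE.
Qed.

Definition Pf X := ip (EMx X) (EMx X).

Lemma HD_Pf : HD Pf (fun X V => 2 * ip (EMx X) (dEM X V)).
Proof.
have H := HD_sum (fun i => HD_sum (fun j => HD_mul (HD_E i j) (HD_E i j))).
apply: HD_ext H _ => x v; rewrite /ip mulr_sumr; apply: eq_bigr => i _.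
rewrite mulr_sumr; apply: eq_bigr => j _; ring.
Qed.

Lemma Pf_ge0 X : 0 <= Pf X.
Proof. exact: ip_ge0. Qed.

Variable L2 : R.
Definition cc : R := 3 * L2 ^+ 2.
Lemma cc_ge0 : 0 <= cc.
Proof. by rewrite /cc mulr_ge0 // sqr_ge0. Qed.

Definition uf X := Num.sqrt (cc * Pf X + 1).

Lemma uf_arg_gt0 X : 0 < cc * Pf X + 1.
Proof. by rewrite ltr_wpDl // mulr_ge0 // ?cc_ge0 // Pf_ge0. Qed.

Lemma uf_ge1 X : 1 <= uf X.
Proof.
rewrite /uf -{1}sqrtr1; apply: ler_wsqrtr; rewrite lerDr. exact: mulr_ge0 cc_ge0 (Pf_ge0 X).
Qed.

Lemma uf_gt0 X : 0 < uf X.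
Proof. exact: lt_le_trans ltr01 (uf_ge1 X). Qed.

Definition du X V := cc * ip (EMx X) (dEM X V) / uf X.

Lemma HD_uf : HD uf du.
Proof.
have H := HD_sqrt (HD_add (HD_scal cc HD_Pf) (HD_cst 1)) uf_arg_gt0.
apply: HD_ext H _ => x v; rewrite /du /uf addr0.
have u0 : Num.sqrt (cc * Pf x + 1) != 0 by rewrite gt_eqF // sqrtr_gt0 uf_arg_gt0.
field; exact: u0.
Qed.

Lemma hbarE X : hbar L2 X = L2 * uf X - L2.
Proof. by rewrite /hbar /gfun /uf frob_sq. Qed.

Lemma HD_hbar : HD (hbar L2) (fun X V => L2 * du X V).
Proof.
apply: HD_feq (HD_ext (HD_sub (HD_scal L2 HD_uf) (HD_cst L2)) _) _.
  by move=> x v; rewrite subr0.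
by move=> x; rewrite hbarE.
Qed.

Definition kk := 2 * L2 * cc.
Definition Gf (a b : 'I_3) X := kk * ((X *m EMx X) a b * (uf X)^-1).
Definition Gm X : M := \matrix_(a, b) Gf a b X.

Lemma grad_hbar X : grad (hbar L2) X = Gm X.
Proof.
apply/matrixP => a b; rewrite !mxE.
have [_ ->] := HD_hbar X.
rewrite /du ip_EdE ip_delta /Gf /kk; ring.
Qed.

Definition dGf (a b : 'I_3) X V := kk * ((X *m EMx X) a b * (- (uf X) ^- 2 * du X V)
   + (uf X)^-1 * ((V *m EMx X + X *m dEM X V) a b)).

Lemma HD_G a b : HD (Gf a b) (dGf a b).
Proof.
have Hid : forall i j, HD (fun X : M => X i j) (fun X V => V i j) by exact: HD_coord.
have H1 := HD_mulmx a b Hid HD_E.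
have H2 := HD_inv HD_uf (fun x => lt0r_neq0 (uf_gt0 x)).
have := HD_scal kk (HD_mul H1 H2).
by [].
Qed.

End Funs.


Section LL.
Variable R : realType.
Local Notation M := 'M[R]_3.
Implicit Types A B C X V W : M.

Definition LLb (f : M -> R) := forall Bd : R, exists K : R, 0 <= K /\
  forall y z, frob y <= Bd -> frob z <= Bd -> `|f y - f z| <= K * frob (y - z).

Lemma LL_bound f : LLb f -> forall Bd, exists C : R, 0 <= C /\ forall y, frob y <= Bd -> `|f y| <= C.
Proof.
move=> H Bd; have [K [K0 HK]] := H Bd.
exists (K * `|Bd| + `|f 0|); split; first by rewrite addr_ge0 // mulr_ge0.
move=> y yB.
have B0 : 0 <= Bd by apply: le_trans (frob_ge0 _) yB.
have := HK y 0 yB; rewrite frob0 => /(_ B0).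
rewrite subr0 (ger0_norm B0) => h.
have h2 : `|f y| <= `|f y - f 0| + `|f 0|.
  by rewrite -[X in `|X|](subrK (f 0) (f y)) ler_normD.
have : K * frob y <= K * Bd by rewrite ler_wpM2l.
lra.
Qed.

Lemma LL_cst (a : R) : LLb (fun _ => a).
Proof. by move=> Bd; exists 0; split => // y z _ _; rewrite subrr normr0 mul0r. Qed.

Lemma LL_coord i j : LLb (fun X : M => X i j).
Proof.
move=> Bd; exists 1; split => // y z _ _; rewrite mul1r.
have := entry_le (y - z) i j; rewrite !mxE; by [].
Qed.

Lemma LL_add f g : LLb f -> LLb g -> LLb (fun x => f x + g x).
Proof.
move=> Hf Hg Bd; have [K1 [K10 H1]] := Hf Bd; have [K2 [K20 H2]] := Hg Bd.
exists (K1 + K2); split; first exact: addr_ge0.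
move=> y z yB zB; have := H1 y z yB zB; have := H2 y z yB zB.
have : `|f y + g y - (f z + g z)| <= `|f y - f z| + `|g y - g z|.
  by rewrite (_ : f y + g y - (f z + g z) = (f y - f z) + (g y - g z)) ?ler_normD //; ring.
lra.
Qed.

Lemma LL_opp f : LLb f -> LLb (fun x => - f x).
Proof.
move=> Hf Bd; have [K [K0 H]] := Hf Bd; exists K; split => // y z yB zB.
by rewrite -opprD normrN H.
Qed.

Lemma LL_mul f g : LLb f -> LLb g -> LLb (fun x => f x * g x).
Proof.
move=> Hf Hg Bd; have [K1 [K10 H1]] := Hf Bd; have [K2 [K20 H2]] := Hg Bd.
have [C1 [C10 B1]] := LL_bound Hf Bd; have [C2 [C20 B2]] := LL_bound Hg Bd.
exists (C1 * K2 + C2 * K1); split; first by rewrite addr_ge0 // mulr_ge0.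
move=> y z yB zB.
have e : f y * g y - f z * g z = f y * (g y - g z) + g z * (f y - f z) by ring.
rewrite e; apply: le_trans (ler_normD _ _) _; rewrite !normrM.
have d0 := frob_ge0 (y - z).
have a1 : `|f y| * `|g y - g z| <= C1 * (K2 * frob (y - z)).
  by apply: ler_pM => //; [exact: B1|exact: H2].
have a2 : `|g z| * `|f y - f z| <= C2 * (K1 * frob (y - z)).
  by apply: ler_pM => //; [exact: B2|exact: H1].
have : (C1 * K2 + C2 * K1) * frob (y - z) = C1 * (K2 * frob (y - z)) + C2 * (K1 * frob (y - z)) by ring.
lra.
Qed.

Lemma LL_sum n (F : 'I_n -> M -> R) : (forall i, LLb (F i)) -> LLb (fun x => \sum_(i < n) F i x).
Proof.
elim: n F => [|n IH] F H.
  by apply: (@eq_ind _ (fun _ => 0)); [exact: LL_cst|apply/funext => x; rewrite big_ord0].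
have -> : (fun x => \sum_(i < n.+1) F i x) = (fun x => F ord0 x + \sum_(i < n) F (lift ord0 i) x).
  by apply/funext => x; rewrite big_ord_recl.
apply: LL_add; first exact: H.
exact: (IH (fun i => F (lift ord0 i))).
Qed.

Lemma LL_inv f : LLb f -> (forall x, 1 <= f x) -> LLb (fun x => (f x)^-1).
Proof.
move=> Hf f1 Bd; have [K [K0 H]] := Hf Bd; exists K; split => // y z yB zB.
have fy0 : 0 < f y by apply: lt_le_trans ltr01 (f1 y).
have fz0 : 0 < f z by apply: lt_le_trans ltr01 (f1 z).
have e : (f y)^-1 - (f z)^-1 = (f z - f y) / (f y * f z).
  by field; rewrite ?lt0r_neq0.
rewrite e normrM normfV (ger0_norm (ltW (mulr_gt0 fy0 fz0))) distrC.
apply: le_trans (H y z yB zB).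
rewrite ler_pdivrMr ?mulr_gt0 // ler_peMr //.
have := f1 y; have := f1 z; nra.
Qed.

Lemma LL_sqrt f : LLb f -> (forall x, 1 <= f x) -> LLb (fun x => Num.sqrt (f x)).
Proof.
move=> Hf f1 Bd; have [K [K0 H]] := Hf Bd; exists K; split => // y z yB zB.
apply: le_trans (H y z yB zB).
have sy : 1 <= Num.sqrt (f y) by rewrite -sqrtr1 ler_wsqrtr.
have sz : 1 <= Num.sqrt (f z) by rewrite -sqrtr1 ler_wsqrtr.
have e : f y - f z = (Num.sqrt (f y) - Num.sqrt (f z)) * (Num.sqrt (f y) + Num.sqrt (f z)).
  rewrite -subr_sqr !sqr_sqrtr //; apply: le_trans ler01 _; exact: f1.
rewrite e normrM (ger0_norm (addr_ge0 (le_trans ler01 sy) (le_trans ler01 sz))).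
rewrite ler_peMr //; lra.
Qed.

Definition LLm (F : M -> M) := forall i j, LLb (fun x => F x i j).

Lemma LLm_cst A : LLm (fun _ => A).
Proof. by move=> i j; exact: LL_cst. Qed.

Lemma LLm_id : LLm (fun x => x).
Proof. by move=> i j; exact: LL_coord. Qed.

Lemma LLm_add F G : LLm F -> LLm G -> LLm (fun x => F x + G x).
Proof.
move=> HF HG i j; apply: (@eq_ind _ (fun x => F x i j + G x i j)).
  exact: LL_add.
by apply/funext => x; rewrite mxE.
Qed.

Lemma LLm_opp F : LLm F -> LLm (fun x => - F x).
Proof.
move=> HF i j; apply: (@eq_ind _ (fun x => - F x i j)); first exact: LL_opp.
by apply/funext => x; rewrite mxE.
Qed.

Lemma LLm_tr F : LLm F -> LLm (fun x => (F x)^T).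
Proof.
move=> HF i j; apply: (@eq_ind _ (fun x => F x j i)); first exact: HF.
by apply/funext => x; rewrite mxE.
Qed.

Lemma LLm_mul F G : LLm F -> LLm G -> LLm (fun x => F x *m G x).
Proof.
move=> HF HG i j; apply: (@eq_ind _ (fun x => \sum_k F x i k * G x k j)).
  by apply: LL_sum => k; apply: LL_mul.
by apply/funext => x; rewrite mxE.
Qed.

Lemma LL_ip F G : LLm F -> LLm G -> LLb (fun x => ip (F x) (G x)).
Proof.
by move=> HF HG; apply: LL_sum => i; apply: LL_sum => j; apply: LL_mul.
Qed.

End LL.


Section Hess.
Variable R : realType.
Local Notation M := 'M[R]_3.
Implicit Types A B C X V W : M.
Variable L2 : R.

Lemma LL_feq (f g : M -> R) : LLb f -> (forall x, f x = g x) -> LLb g.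
Proof. by move=> H E; have -> : g = f by apply/funext => x; rewrite E. Qed.

Lemma LLm_EM : LLm (@EMx R).
Proof.
apply: LLm_add; first by apply: LLm_mul; [apply: LLm_tr; exact: LLm_id|exact: LLm_id].
apply: LLm_opp; exact: LLm_cst.
Qed.

Lemma LLm_dEM V : LLm (fun X => dEM X V).
Proof.
apply: LLm_add; apply: LLm_mul.
- exact: LLm_cst.
- exact: LLm_id.
- apply: LLm_tr; exact: LLm_id.
- exact: LLm_cst.
Qed.

Lemma LL_uf : LLb (uf L2).
Proof.
apply: LL_sqrt; last by move=> x; rewrite lerDr mulr_ge0 ?cc_ge0 ?Pf_ge0.
apply: LL_add; last exact: LL_cst.
apply: LL_mul; first exact: LL_cst.
exact: LL_ip LLm_EM LLm_EM.
Qed.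

Lemma LL_ufV : LLb (fun X => (uf L2 X)^-1).
Proof. apply: LL_inv; [exact: LL_uf|exact: uf_ge1]. Qed.

Lemma LL_ufV2 : LLb (fun X => (uf L2 X) ^- 2).
Proof.
apply: LL_inv; first by apply: (LL_feq (LL_mul LL_uf LL_uf)) => x; rewrite expr2.
move=> x; have := uf_ge1 L2 x; rewrite expr2; nra.
Qed.

Lemma LL_du V : LLb (fun X => du L2 X V).
Proof.
apply: LL_mul; last exact: LL_ufV.
apply: LL_mul; first exact: LL_cst.
exact: LL_ip LLm_EM (LLm_dEM V).
Qed.

Lemma LL_dGf a b V : LLb (fun X => dGf L2 a b X V).
Proof.
apply: LL_mul; first exact: LL_cst.
apply: LL_add; apply: LL_mul.
- exact: (LLm_mul (@LLm_id R) LLm_EM a b).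
- apply: LL_mul; last exact: LL_du.
  by apply: (LL_feq (LL_opp LL_ufV2)) => x.
- exact: LL_ufV.
- exact: (LLm_add (LLm_mul (LLm_cst V) LLm_EM) (LLm_mul (@LLm_id R) (LLm_dEM V)) a b).
Qed.

Lemma grad_entry a b : (fun y => grad (hbar L2) y a b) = Gf L2 a b.
Proof. by apply/funext => y; rewrite grad_hbar mxE. Qed.

Lemma hessE y a b k l : hess (hbar L2) y a b k l = dGf L2 a b y (delta_mx k l).
Proof. by rewrite /hess grad_entry; have [_ ->] := HD_G L2 a b y. Qed.

Lemma hess_LL : hess_locally_lipschitz (hbar L2).
Proof.
move=> x.
pose Q (p : 'I_3 * 'I_3 * 'I_3 * 'I_3) (K : R) := 0 <= K /\ forall y z,
  frob y <= frob x + 1 -> frob z <= frob x + 1 ->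
  `|dGf L2 p.1.1.1 p.1.1.2 y (delta_mx p.1.2 p.2) - dGf L2 p.1.1.1 p.1.1.2 z (delta_mx p.1.2 p.2)|
   <= K * frob (y - z).
have ex : forall p, exists K, Q p K by move=> p; exact: LL_dGf.
have [Kf HK] := choice ex.
exists 1, (\sum_p Kf p); split => // y z yx zx i j k l.
have bnd : forall w, frob (w - x) < 1 -> frob w <= frob x + 1.
  move=> w wx; have := frobD x (w - x); rewrite addrC subrK => h.
  apply: le_trans h _; rewrite lerD2l; exact: ltW.
have [K0 HQ] := HK (i, j, k, l).
rewrite !hessE; apply: le_trans (HQ y z (bnd _ yx) (bnd _ zx)) _.
apply: ler_wpM2r; first exact: frob_ge0.
rewrite (bigD1 (i, j, k, l)) //= lerDl; apply: sumr_ge0 => p _.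
by have [] := HK p.
Qed.

End Hess.


Section Main.
Variable R : realType.
Local Notation M := 'M[R]_3.
Implicit Types A B C X V W : M.

Lemma tr_le A : \tr A <= 3 * frob A.
Proof.
rewrite /mxtrace (@le_trans _ _ (\sum_(i < 3) frob A)) //.
  by apply: ler_sum => i _; exact: le_trans (ler_norm _) (entry_le A i i).
by rewrite sumr_const card_ord mulr_natl.
Qed.

Lemma frobX_le X : frob X ^+ 2 <= 3 + 3 * frob (EMx X).
Proof.
rewrite frob_sq ip_tr (_ : X^T *m X = EMx X + 1%:M); last by rewrite /EMx subrK.
rewrite mxtraceD mxtrace1 addrC lerD2l; exact: tr_le.
Qed.

Lemma frob_dEM X V : frob (dEM X V) <= 2 * frob X * frob V.
Proof.
apply: le_trans (frobD _ _) _.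
have h1 := frob_mul V^T X; have h2 := frob_mul X^T V.
rewrite !frob_tr in h1 h2.
have := frob_ge0 X; have := frob_ge0 V; nra.
Qed.

Variable L2 : R.
Hypothesis L2pos : 0 < L2.

Definition qL : R := 72 * L2 ^+ 3 + 78 * L2 ^+ 2.

Lemma qL_ge0 : 0 <= qL.
Proof. by rewrite /qL addr_ge0 // mulr_ge0 // exprn_ge0 // ltW. Qed.

Definition dGm X V : M := kk L2 *: ((- (uf L2 X) ^- 2 * du L2 X V) *: (X *m EMx X)
   + (uf L2 X)^-1 *: (V *m EMx X + X *m dEM X V)).

Lemma dGfE a b X V : dGf L2 a b X V = dGm X V a b.
Proof. rewrite /dGf /dGm !mxE; ring. Qed.

Lemma real_bound (e z nv u : R) : 0 <= e -> 0 <= z -> 0 <= nv -> 1 <= u ->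
  u ^+ 2 = cc L2 * e ^+ 2 + 1 -> z ^+ 2 <= 3 + 3 * e ->
  kk L2 * ((u ^+ 2)^-1 * (cc L2 * (e * (2 * z * nv)) / u) * (z * e)
          + u^-1 * (nv * e + z * (2 * z * nv))) <= qL * nv.
Proof.
move=> e0 z0 nv0 u1 ue ze.
have u0 : 0 < u by apply: lt_le_trans ltr01 u1.
set a := u^-1.
have a0 : 0 < a by rewrite invr_gt0.
have a1 : a <= 1 by rewrite invr_le1 // ?unitfE ?lt0r_neq0.
have ua : u * a = 1 by rewrite /a mulfV // lt0r_neq0.
have c0 : 0 <= cc L2 by exact: cc_ge0.
have ce : cc L2 * e ^+ 2 * a ^+ 2 <= 1.
  have : cc L2 * e ^+ 2 <= u ^+ 2 by rewrite ue lerDl.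
  move=> h; have : cc L2 * e ^+ 2 * a ^+ 2 <= u ^+ 2 * a ^+ 2 by rewrite ler_wpM2r // sqr_ge0.
  by rewrite -exprMn ua expr1n.
have Le : L2 * e * a <= 1.
  have h : (L2 * e) ^+ 2 <= u ^+ 2.
    by rewrite ue /cc exprMn; have := sqr_ge0 (L2 * e); rewrite exprMn; nra.
  have : L2 * e <= u by apply: le_of_sq' => //; exact: ltW.
  move=> h2; have : L2 * e * a <= u * a by rewrite ler_wpM2r // ltW.
  by rewrite ua.
have -> : (u ^+ 2)^-1 = a ^+ 2 by rewrite /a exprVn.
rewrite -/a.
have E : kk L2 * (a ^+ 2 * (cc L2 * (e * (2 * z * nv)) * a) * (z * e) + a * (nv * e + z * (2 * z * nv)))
   = 2 * L2 * cc L2 * nv * (2 * z ^+ 2 * a * (cc L2 * e ^+ 2 * a ^+ 2) + (e + 2 * z ^+ 2) * a).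
  by rewrite /kk; ring.
rewrite E.
have s1 : 2 * z ^+ 2 * a * (cc L2 * e ^+ 2 * a ^+ 2) <= 2 * z ^+ 2 * a.
  rewrite ler_piMr //; apply: mulr_ge0; [apply: mulr_ge0 => //; exact: sqr_ge0|exact: ltW].
have s2 : 2 * z ^+ 2 * a * (cc L2 * e ^+ 2 * a ^+ 2) + (e + 2 * z ^+ 2) * a <= 12 * a + 13 * (e * a).
  have : z ^+ 2 * a <= (3 + 3 * e) * a by rewrite ler_wpM2r // ltW.
  lra.
have k0 : 0 <= 2 * L2 * cc L2 * nv by rewrite !mulr_ge0 // ltW.
apply: le_trans (ler_wpM2l k0 s2) _.
rewrite /qL /cc.
have : L2 * (L2 * e * a) <= L2 by rewrite ler_piMr // ltW.
have : 0 <= L2 by exact: ltW.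
move=> l0 h.
have : L2 * L2 * (L2 * e * a) * nv <= L2 * L2 * nv.
  by rewrite ler_wpM2r // -mulrA ler_wpM2l // mulr_ge0.
have : a * nv <= nv by rewrite ler_piMl.
move=> h3 h4.
have : L2 ^+ 3 * (a * nv) <= L2 ^+ 3 * nv by rewrite ler_wpM2l // exprn_ge0.
move=> h5.
have E2 : 2 * L2 * (3 * L2 ^+ 2) * nv * (12 * a + 13 * (e * a))
   = 72 * (L2 ^+ 3 * (a * nv)) + 78 * (L2 * L2 * (L2 * e * a) * nv) by ring.
rewrite E2.
have E3 : (72 * L2 ^+ 3 + 78 * L2 ^+ 2) * nv = 72 * (L2 ^+ 3 * nv) + 78 * (L2 * L2 * nv) by ring.
rewrite E3; lra.
Qed.


Lemma frob_dGm X V : frob (dGm X V) <= qL * frob V.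
Proof.
set e := frob (EMx X); set z := frob X; set nv := frob V; set u := uf L2 X.
have e0 : 0 <= e := frob_ge0 _.
have z0 : 0 <= z := frob_ge0 _.
have nv0 : 0 <= nv := frob_ge0 _.
have u1 : 1 <= u := uf_ge1 L2 X.
have u0 : 0 < u := uf_gt0 L2 X.
have ue : u ^+ 2 = cc L2 * e ^+ 2 + 1.
  by rewrite /u /uf sqr_sqrtr ?frob_sq // ltW // uf_arg_gt0.
apply: le_trans (real_bound e0 z0 nv0 u1 ue (frobX_le X)).
have kk0 : 0 <= kk L2 by rewrite /kk mulr_ge0 ?cc_ge0 // mulr_ge0 // ltW.
rewrite /dGm frobZ ger0_norm // ler_wpM2l //.
apply: le_trans (frobD _ _) _; rewrite !frobZ.
have hdu : `|du L2 X V| <= cc L2 * (e * (2 * z * nv)) / u.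
  rewrite /du normrM normrM normfV (ger0_norm (ltW u0)) ger0_norm ?cc_ge0 //.
  rewrite ler_wpM2r ?invr_ge0 ?(ltW u0) // ler_wpM2l ?cc_ge0 //.
  apply: le_trans (ip_le _ _) _; rewrite ler_wpM2l //; exact: frob_dEM.
have hXE : frob (X *m EMx X) <= z * e := frob_mul _ _.
have hM : frob (V *m EMx X + X *m dEM X V) <= nv * e + z * (2 * z * nv).
  apply: le_trans (frobD _ _) _; apply: lerD; first exact: frob_mul.
  apply: le_trans (frob_mul _ _) _; rewrite ler_wpM2l //.
  by have := frob_dEM X V.
apply: lerD.
  rewrite normrM normrN normfV (ger0_norm (exprn_ge0 2 (ltW u0))).
  apply: ler_pM => //; [|exact: frob_ge0|].
    by rewrite mulr_ge0 // invr_ge0 exprn_ge0 // ltW.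
  by rewrite ler_wpM2l // invr_ge0 exprn_ge0 // ltW.
rewrite normfV (ger0_norm (ltW u0)); apply: ler_wpM2l => //; rewrite invr_ge0 ltW //.
Qed.

Lemma ip_dGm X V W : `|ip W (dGm X V)| <= qL * frob V * frob W.
Proof.
apply: le_trans (ip_le _ _) _; rewrite mulrC ler_wpM2r ?frob_ge0 //; exact: frob_dGm.
Qed.

End Main.


Section Final.
Variable R : realType.
Local Notation M := 'M[R]_3.
Implicit Types A B C X V W : M.

Lemma MVT01 (phi dphi : R -> R) : (forall t : R, is_derive t 1 phi (dphi t)) ->
  exists2 c, c \in `[0, 1]%R & phi 1 - phi 0 = dphi c.
Proof.
move=> H.
have dv : forall t, derivable phi t 1 by move=> t; have [] := H t.
have [c c01 e] := @MVT_segment R phi dphi 0 1 ler01 (fun t _ => H t)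
  (derivable_within_continuous (fun t _ => dv t)).
by exists c => //; rewrite e subr0 mulr1.
Qed.

Variable L2 : R.
Hypothesis L2pos : 0 < L2.

Lemma G_lip x y : frob (Gm L2 x - Gm L2 y) <= qL L2 * frob (x - y).
Proof.
set w := Gm L2 x - Gm L2 y; set v := x - y.
pose Psi := fun X => \sum_a \sum_b w a b * Gf L2 a b X.
have HPsi : HD Psi (fun X V => \sum_a \sum_b w a b * dGf L2 a b X V).
  by apply: HD_sum => a; apply: HD_sum => b; apply: HD_scal; exact: HD_G.
have PsiE : forall X, Psi X = ip w (Gm L2 X).
  move=> X; rewrite /Psi /ip; apply: eq_bigr => a _; apply: eq_bigr => b _. by rewrite (_ : Gm L2 X a b = Gf L2 a b X) // /Gm mxE.
have dPsiE : forall X V, \sum_a \sum_b w a b * dGf L2 a b X V = ip w (dGm L2 X V).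
  by move=> X V; apply: eq_bigr => a _; apply: eq_bigr => b _; rewrite dGfE.
have [c _ e] := MVT01 (HD_line y v HPsi).
have ipB : forall A B C : M, ip A (B - C) = ip A B - ip A C.
  by move=> A B C; rewrite ipDr (ipC _ (- _)) ipNl (ipC C A).
move: e; rewrite dPsiE !PsiE scale1r scale0r addr0 /v (addrC y (x - y)) subrK.
rewrite -ipB -/w -frob_sq => e.
have := ip_dGm L2pos (y + c *: v) v w; rewrite -e -/v.
have := frob_ge0 w; have := frob_ge0 v; have := qL_ge0 L2pos.
rewrite ger0_norm ?sqr_ge0 // => q0 v0 w0 h.
have [->|wn0] := eqVneq (frob w) 0; first exact: mulr_ge0.
have wp : 0 < frob w by rewrite lt_def wn0 w0.
by move: h; rewrite expr2 ler_pM2r.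
Qed.


Lemma convex01 (phi dphi : R -> R) : (forall t : R, is_derive t 1 phi (dphi t)) ->
  (forall s t, s <= t -> dphi s <= dphi t) ->
  forall t, 0 <= t -> t <= 1 -> phi t <= t * phi 1 + (1 - t) * phi 0.
Proof.
move=> H mono t t0 t1.
have dv : forall t, derivable phi t 1 by move=> s; have [] := H s.
have [c1 c1i e1] := @MVT_segment R phi dphi 0 t t0 (fun s _ => H s)
  (derivable_within_continuous (fun s _ => dv s)).
have [c2 c2i e2] := @MVT_segment R phi dphi t 1 t1 (fun s _ => H s)
  (derivable_within_continuous (fun s _ => dv s)).
move: c1i c2i; rewrite !in_itv /= => /andP[_ c1t] /andP[tc2 _].
have d12 := mono _ _ (le_trans c1t tc2).
have : 0 <= t * (1 - t) * (dphi c2 - dphi c1).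
  by rewrite !mulr_ge0 // subr_ge0.
move: e1 e2; rewrite subr0; nra.
Qed.

Lemma GmZ X : Gm L2 X = (kk L2 * (uf L2 X)^-1) *: (X *m EMx X).
Proof. by apply/matrixP => a b; rewrite /Gm /Gf !mxE; ring. Qed.

Definition Fc X := hbar L2 X + qL L2 / 2 * frob X ^+ 2.

Lemma HD_Fc : HD Fc (fun X V => ip (Gm L2 X) V + qL L2 * ip X V).
Proof.
have Hn : HD (fun X : M => frob X ^+ 2) (fun X V => 2 * ip X V).
  have H := HD_sum (fun i => HD_sum (fun j => HD_mul (@HD_coord R i j) (@HD_coord R i j))).
  apply: HD_feq (HD_ext H _) _ => [X V|X]; last by rewrite frob_sq.
  rewrite /ip mulr_sumr; apply: eq_bigr => i _; rewrite mulr_sumr; apply: eq_bigr => j _; ring.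
apply: HD_ext (HD_add (HD_hbar L2) (HD_scal (qL L2 / 2) Hn)) _ => X V.
rewrite GmZ ipZl /du ip_EdE /kk.
have u0 : uf L2 X != 0 by exact: lt0r_neq0 (uf_gt0 L2 X).
by field.
Qed.

Lemma Fc_convex : convex_mx Fc.
Proof.
move=> x y t t0 t1.
set v := x - y.
pose dphi := fun s : R => ip (Gm L2 (y + s *: v)) v + qL L2 * ip (y + s *: v) v.
have H := HD_line y v HD_Fc.
have mono : forall s t, s <= t -> dphi s <= dphi t.
  move=> s r sr; rewrite /dphi.
  have ipB : forall A B C : M, ip (B - C) A = ip B A - ip C A.
    by move=> A B C; rewrite ipDl ipNl.
  have eZ : (y + r *: v) - (y + s *: v) = (r - s) *: v.
    by apply/matrixP => i j; rewrite !mxE; ring.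
  have h1 := G_lip (y + r *: v) (y + s *: v).
  rewrite eZ frobZ ger0_norm ?subr_ge0 // in h1.
  have h2 := ip_le (Gm L2 (y + r *: v) - Gm L2 (y + s *: v)) v.
  have h3 : ip (y + r *: v) v - ip (y + s *: v) v = (r - s) * frob v ^+ 2.
    by rewrite -ipB eZ ipZl frob_sq.
  rewrite ipB in h2.
  have q0 := qL_ge0 L2pos; have v0 := frob_ge0 v.
  have : qL L2 * ((r - s) * frob v) * frob v = qL L2 * ((r - s) * frob v ^+ 2) by ring.
  have : 0 <= r - s by rewrite subr_ge0.
  move: h2; rewrite ler_norml => /andP[h2 _].
  have : frob (Gm L2 (y + r *: v) - Gm L2 (y + s *: v)) * frob v <= qL L2 * ((r - s) * frob v) * frob v.
    by rewrite ler_wpM2r.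
  nra.
have := convex01 H mono t0 t1.
rewrite scale1r scale0r addr0 /v (addrC y (x - y)) subrK.
have -> : y + t *: (x - y) = t *: x + (1 - t) *: y.
  by apply/matrixP => i j; rewrite !mxE; ring.
by [].
Qed.

End Final.


Unset Implicit Arguments.

Lemma twice_hbar (R : realType) (L2 : R) : twice_differentiable (hbar L2).
Proof.
split; first by move=> x; have [] := HD_hbar L2 x.
have -> : grad (hbar L2) = \sum_a \sum_b (fun X => Gf L2 a b X *: delta_mx a b).
  apply/funext => X; rewrite grad_hbar fct_sumE {1}(matrix_sum_delta (Gm L2 X)).
  apply: eq_bigr => a _; rewrite fct_sumE; apply: eq_bigr => b _.
  by rewrite /Gm mxE.
move=> x; apply: differentiable_sum => a; apply: differentiable_sum => b.
apply: differentiableZl; by have [] := HD_G L2 a b x.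
Qed.

Lemma gfun_facts (R : realType) (L2 : R) : 0 < L2 ->
      (forall x y : R, `|x| <= `|y| -> gfun L2 x <= gfun L2 y) /\
      (exists x0 : R, gfun L2 x0 = 0) /\ (forall x : R, 0 <= gfun L2 x) /\
      (forall x : R, `|x| = L2^-1 -> gfun L2 x = L2).
Proof.
move=> L0; rewrite /gfun; split.
  move=> x y xy; rewrite lerD2r; apply: ler_wpM2l; first exact: ltW.
  apply: ler_wsqrtr; rewrite lerD2r; apply: ler_wpM2l; first by rewrite mulr_ge0 ?sqr_ge0.
  rewrite -(real_normK (num_real x)) -(real_normK (num_real y)) !expr2.
  by apply: ler_pM.
split; first by exists 0; rewrite expr0n /= mulr0 add0r sqrtr1 mulr1 subrr.
split.
  move=> x; rewrite subr_ge0 -{1}[L2]mulr1; apply: ler_wpM2l; first exact: ltW.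
  rewrite -{1}sqrtr1; apply: ler_wsqrtr; rewrite lerDr. apply: mulr_ge0; [apply: mulr_ge0 => //; exact: sqr_ge0|exact: sqr_ge0].
move=> x xe; rewrite -(real_normK (num_real x)) xe.
have -> : 3 * L2 ^+ 2 * L2^-1 ^+ 2 + 1 = 2 ^+ 2.
  by field; rewrite lt0r_neq0.
rewrite sqrtr_sqr ger0_norm //; ring.
Qed.

Theorem corollary2 (R : realType) :
  (exists q : {poly R}, forall L2 : R, 0 < L2 ->
      curvature_bounded q.[L2] (hbar L2)) /\
  (forall L2 : R, 0 < L2 ->
      twice_differentiable (hbar L2) /\
      hess_locally_lipschitz (hbar L2) /\
      (forall x y : R, `|x| <= `|y| -> gfun L2 x <= gfun L2 y) /\
      (exists x0 : R, gfun L2 x0 = 0) /\ (forall x : R, 0 <= gfun L2 x) /\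
      (forall x : R, `|x| = L2^-1 -> gfun L2 x = L2)).
Proof.
split.
  exists (72 *: 'X^3 + 78 *: 'X^2) => L2 L0.
  have -> : (72 *: 'X^3 + 78 *: 'X^2 : {poly R}).[L2] = qL L2.
    by rewrite hornerD !hornerZ !hornerXn.
  split; first exact: Fc_convex.
  split; first by move=> x; have [] := HD_hbar L2 x.
  by move=> x y; rewrite !grad_hbar; exact: G_lip.
move=> L2 L0; split; first exact: twice_hbar.
split; first exact: hess_LL.
exact: gfun_facts.
Qed.
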